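(* Let $\mathcal{C}_i\in\mathbb{R}^{n_{1i}\times n_{2i}\times d_i}$ and let $\Phi_{\theta_i}:\mathbb{R}\to\mathbb{R}^{d_i}$ be an $L$-layer multilayer perceptron with weight matrices $\mathbf{W}_1,\dots,\mathbf{W}_L$ and activation function $\sigma:\mathbb{R}\to\mathbb{R}$ (applied entrywise) that is Lipschitz continuous with Lipschitz constant $L_\sigma$. Define $\widetilde{\mathbf{G}}_i(p)=\mathcal{C}_i\times_3\Phi_{\theta_i}(p)$. Assume $\|\mathcal{C}_i\|_1\le\kappa$ and $\|\mathbf{W}_\ell\|_1\le\eta$ for every $\ell=1,\dots,L$. Then for all $p_1,p_2\in\mathbb{R}$, $$\|\widetilde{\mathbf{G}}_i(p_1)-\widetilde{\mathbf{G}}_i(p_2)\|_F\le\kappa\,(L_\sigma\eta)^L\,|p_1-p_2|.$$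
   Context: The $L$-layer MLP is $\mathbf{h}^{(0)}=p\in\mathbb{R}$, $\mathbf{h}^{(\ell)}=\sigma(\mathbf{W}_\ell\mathbf{h}^{(\ell-1)}+\mathbf{b}_\ell)$ for $\ell=1,\dots,L$ (with bias vectors $\mathbf{b}_\ell$, possibly zero), and $\Phi_{\theta_i}(p)=\mathbf{h}^{(L)}\in\mathbb{R}^{d_i}$; the weight matrices have compatible sizes with $\mathbf{W}_1$ having one column and $\mathbf{W}_L$ having $d_i$ rows. For a matrix or tensor, $\|\cdot\|_1$ denotes the entrywise $\ell_1$ norm (sum of absolute values of all entries), and $\|\cdot\|_F$ the Frobenius norm. For $\mathcal{C}\in\mathbb{R}^{n_1\times n_2\times d}$ and $\mathbf{x}\in\mathbb{R}^d$, $\mathcal{C}\times_3\mathbf{x}:=\sum_{\ell=1}^d x_\ell\,\mathcal{C}(:,:,\ell)\in\mathbb{R}^{n_1\times n_2}$. *)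

(* Defs.v *)
From mathcomp Require Import all_boot all_order all_algebra.
From mathcomp Require Import reals.
Set Implicit Arguments. Unset Strict Implicit. Unset Printing Implicit Defensive.
Import Order.TTheory GRing.Theory Num.Theory.
Local Open Scope ring_scope.

(* Hidden layers of an MLP with layer widths w (w 0 = 1 is the scalar input,
   w L = d the output dimension), weights W l : 'M_(w l.+1, w l) (this is the
   paper's W_{l+1}) and biases b l : 'cV_(w l.+1) (the paper's b_{l+1}).
   h 0 = p (as a column vector; w 0 = 1 is assumed in the theorem),
   h (l+1) = sigma entrywise (W l *m h l + b l). *)
Fixpoint mlp_hidden (R : ringType) (w : nat -> nat) (sigma : R -> R)
  (W : forall l : nat, 'M[R]_(w l.+1, w l)) (b : forall l : nat, 'cV[R]_(w l.+1))
  (p : R) (l : nat) : 'cV[R]_(w l) :=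
  match l with
  | 0 => const_mx p
  | l'.+1 => map_mx sigma (W l' *m mlp_hidden sigma W b p l' + b l')
  end.

Definition mx_l1 (R : numDomainType) m n (A : 'M[R]_(m, n)) : R :=
  \sum_(i < m) \sum_(j < n) `|A i j|.

Definition mx_frob (R : rcfType) m n (A : 'M[R]_(m, n)) : R :=
  Num.sqrt (\sum_(i < m) \sum_(j < n) (A i j) ^+ 2).

Definition tensor_l1 (R : numDomainType) n1 n2 d (C : 'I_n1 -> 'I_n2 -> 'I_d -> R) : R :=
  \sum_(i < n1) \sum_(j < n2) \sum_(k < d) `|C i j k|.

Definition mode3 (R : ringType) n1 n2 d (C : 'I_n1 -> 'I_n2 -> 'I_d -> R)
  (x : 'cV[R]_d) : 'M[R]_(n1, n2) :=
  \matrix_(i < n1, j < n2) \sum_(k < d) x k ord0 * C i j k.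

(* Main.v *)
Require Import Defs.
From mathcomp Require Import all_boot all_order all_algebra.
From mathcomp Require Import reals.
From mathcomp Require Import lra.
Import Order.TTheory GRing.Theory Num.Theory.
Local Open Scope ring_scope.

Lemma sum_sq_le (R : realType) n (a : 'I_n -> R) :
  (forall i, 0 <= a i) -> \sum_(i < n) a i ^+ 2 <= (\sum_(i < n) a i) ^+ 2.
Proof.
elim: n a => [|n IH] a ha; first by rewrite !big_ord0 expr0n.
rewrite !big_ord_recr /=.
have h1 := IH (fun i => a (widen_ord (leqnSn n) i)) (fun i => ha _).
have h2 : 0 <= \sum_(i < n) a (widen_ord (leqnSn n) i) by apply: sumr_ge0 => i _.
have h3 := ha ord_max.
set s := \sum_(i < n) _ in h1 h2 *.
set t := \sum_(i < n) _ in h1 h2 *.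
nra.
Qed.

Lemma hidden_bound (R : realType) (L : nat) (w : nat -> nat)
  (W : forall l : nat, 'M[R]_(w l.+1, w l)) (b : forall l : nat, 'cV[R]_(w l.+1))
  (sigma : R -> R) (Lsigma eta : R) :
  0 <= Lsigma ->
  (forall x y : R, `|sigma x - sigma y| <= Lsigma * `|x - y|) ->
  (forall l : nat, (l < L)%N -> mx_l1 (W l) <= eta) ->
  forall p1 p2 : R, forall l, (l <= L)%N -> forall i,
    `|mlp_hidden sigma W b p1 l i ord0 - mlp_hidden sigma W b p2 l i ord0|
    <= (Lsigma * eta) ^+ l * `|p1 - p2|.
Proof.
move=> hL hs hW p1 p2; elim=> [|l IH] hl i.
  by rewrite /= !mxE expr0 mul1r.
have IH' := IH (ltnW hl).
have hWl := hW l hl.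
rewrite /= !mxE.
apply: le_trans (hs _ _) _.
set M := (Lsigma * eta) ^+ l * `|p1 - p2|.
have eta0 : 0 <= eta.
  apply: le_trans hWl; rewrite /mx_l1; apply: sumr_ge0 => *; apply: sumr_ge0 => *; done.
have M0 : 0 <= M by apply: mulr_ge0 => //; apply: exprn_ge0; apply: mulr_ge0.
have -> : (\sum_j W l i j * mlp_hidden sigma W b p1 l j ord0 + b l i ord0) -
          (\sum_j W l i j * mlp_hidden sigma W b p2 l j ord0 + b l i ord0) =
          \sum_j W l i j * (mlp_hidden sigma W b p1 l j ord0 - mlp_hidden sigma W b p2 l j ord0).
  rewrite opprD addrACA subrr addr0 -sumrB; apply: eq_bigr => j _; by rewrite mulrBr.
have hs1 : `|\sum_j W l i j * (mlp_hidden sigma W b p1 l j ord0 - mlp_hidden sigma W b p2 l j ord0)|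
   <= mx_l1 (W l) * M.
  apply: le_trans (ler_norm_sum _ _ _) _.
  apply: (@le_trans _ _ (\sum_j `|W l i j| * M)).
    apply: ler_sum => j _; rewrite normrM; apply: ler_wpM2l => //; exact: IH'.
  rewrite -mulr_suml ler_wpM2r //.
  rewrite /mx_l1 (bigD1 i) //= lerDl; apply: sumr_ge0 => k _; apply: sumr_ge0 => *; done.
have -> : (Lsigma * eta) ^+ l.+1 * `|p1 - p2| = Lsigma * (eta * M).
  by rewrite /M exprS !mulrA.
apply: ler_wpM2l => //; apply: le_trans hs1 _; by apply: ler_wpM2r.
Qed.

Lemma frob_le_l1 (R : realType) m n (A : 'M[R]_(m, n)) :
  mx_frob A <= \sum_i \sum_j `|A i j|.
Proof.
rewrite /mx_frob.
have T0 : 0 <= \sum_i \sum_j `|A i j|.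
  by apply: sumr_ge0 => *; apply: sumr_ge0 => *.
rewrite -(ger0_norm T0) -sqrtr_sqr ler_sqrt; last by apply: sqr_ge0.
have hq : \sum_i (\sum_j `|A i j|) ^+ 2 <= (\sum_i \sum_j `|A i j|) ^+ 2.
  by apply: sum_sq_le => i; apply: sumr_ge0 => j _.
apply: le_trans hq.
apply: ler_sum => i _.
have hq : \sum_j `|A i j| ^+ 2 <= (\sum_j `|A i j|) ^+ 2.
  by apply: sum_sq_le => j.
apply: le_trans hq.
apply: ler_sum => j _; by rewrite -normrX ger0_norm // sqr_ge0.
Qed.

Theorem theorem2 (R : realType) (L : nat) (w : nat -> nat) (n1 n2 : nat)
  (C : 'I_n1 -> 'I_n2 -> 'I_(w L) -> R)
  (W : forall l : nat, 'M[R]_(w l.+1, w l)) (b : forall l : nat, 'cV[R]_(w l.+1))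
  (sigma : R -> R) (Lsigma kappa eta : R) :
  w 0%N = 1%N ->
  (forall x y : R, `|sigma x - sigma y| <= Lsigma * `|x - y|) ->
  tensor_l1 C <= kappa ->
  (forall l : nat, (l < L)%N -> mx_l1 (W l) <= eta) ->
  forall p1 p2 : R,
    mx_frob (mode3 C (mlp_hidden sigma W b p1 L) - mode3 C (mlp_hidden sigma W b p2 L))
    <= kappa * (Lsigma * eta) ^+ L * `|p1 - p2|.
Proof.
move=> _ hs hC hW p1 p2.
have hL : 0 <= Lsigma.
  have := hs 0 1; rewrite sub0r normrN normr1 mulr1; apply: le_trans.
  exact: normr_ge0.
have hb := @hidden_bound R L w W b sigma Lsigma eta hL hs hW p1 p2 L (leqnn L).
set M := (Lsigma * eta) ^+ L * `|p1 - p2| in hb.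
have M0 : 0 <= M.
  rewrite /M; apply: mulr_ge0 => //.
  case HL: L => [|L']; first by rewrite expr0.
  apply: exprn_ge0; apply: mulr_ge0 => //.
  have h0 : (0 < L)%N by rewrite HL.
  apply: le_trans (hW 0%N h0); rewrite /mx_l1; apply: sumr_ge0 => *; apply: sumr_ge0 => *; done.
set A := _ - _.
have hA : forall i j, `|A i j| <= M * \sum_k `|C i j k|.
  move=> i j; rewrite /A !mxE -sumrB.
  apply: le_trans (ler_norm_sum _ _ _) _.
  rewrite mulr_sumr; apply: ler_sum => k _.
  rewrite -mulrBl normrM; apply: ler_wpM2r => //.
rewrite -mulrA [kappa * _]mulrC.
apply: (@le_trans _ _ (\sum_i \sum_j `|A i j|)).
  exact: frob_le_l1.
apply: (@le_trans _ _ (M * tensor_l1 C)); last first.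
  by apply: ler_wpM2l.
rewrite /tensor_l1 mulr_sumr; apply: ler_sum => i _.
rewrite mulr_sumr; apply: ler_sum => j _; exact: hA.
Qed.
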